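(* Let $G=(V,E)$ be a graph. Then $\mu(G)=\min|E_G(S;V\setminus T)|$, where the minimum ranges over all pairs of disjoint subsets $S,T\subseteq V$ with $|S|>|T|$.
   Context: All graphs are finite and simple. For a graph $G=(V,E)$ on $n$ vertices, a fractional vertex cover is a function $f:V\to[0,\infty)$ with $f(u)+f(v)\ge 1$ for every edge $uv\in E$; $\tau^*(G)$ denotes the minimum of $\sum_{v\in V}f(v)$ over all fractional vertex covers. For $E'\subseteq E$ let $G-E'=(V,E\setminus E')$. Define $\mu(G)=\min\{|E'| : E'\subseteq E,\ \tau^*(G-E')<n/2\}$. For disjoint $S,T\subseteq V$, $E_G(S;V\setminus T)$ denotes the set of edges of $G$ that either have both endpoints in $S$, or have one endpoint in $S$ and the other in $V\setminus(S\cup T)$. *)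

(* Defs.v *)
From HB Require Import structures.
From mathcomp Require Import all_boot all_order all_algebra.
From mathcomp Require Import classical_sets reals.
Set Implicit Arguments. Unset Strict Implicit. Unset Printing Implicit Defensive.
Import Order.TTheory GRing.Theory Num.Theory.
Local Open Scope ring_scope.

Definition simple_graph (T : finType) (adj : rel T) : Prop :=
  symmetric adj /\ irreflexive adj.

Definition edges (T : finType) (adj : rel T) : {set {set T}} :=
  [set [set u; v] | u in T, v in T & adj u v].

Definition remove_edges (T : finType) (adj : rel T) (E' : {set {set T}}) : rel T :=
  fun u v => adj u v && ([set u; v] \notin E').

Definition frac_vertex_cover (R : realType) (T : finType) (adj : rel T)
  (f : T -> R) : Prop :=
  (forall v, 0 <= f v) /\ (forall u v, adj u v -> 1 <= f u + f v).

Definition tau_star (R : realType) (T : finType) (adj : rel T) : R :=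
  inf [set r : R | exists f : T -> R, frac_vertex_cover adj f /\ r = \sum_(v : T) f v].

(* mu(G) = min { |E'| : E' subset of E, tau^*(G - E') < n/2 }.
   (The sentinel #|E|.+1 is only reached when the range is empty, i.e. n = 0.) *)
Definition mu (R : realType) (T : finType) (adj : rel T) : nat :=
  \big[minn/ #|edges adj|.+1]_(E' in powerset (edges adj)
      | tau_star R (remove_edges adj E') < (#|T|%:R / 2%:R : R)) #|E'|.

(* E_G(S; V \ T): edges with both ends in S, or one end in S and the other
   in V \ (S u T). *)
Definition E_G (T : finType) (adj : rel T) (S U : {set T}) : {set {set T}} :=
  [set e in edges adj | [exists u, exists v,
     (e == [set u; v]) && (u \in S) && ((v \in S) || (v \notin S :|: U))]].

Definition mu_rhs (T : finType) (adj : rel T) : nat :=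
  \big[minn/ #|edges adj|.+1]_(p : {set T} * {set T}
      | [disjoint p.1 & p.2] && (#|p.2| < #|p.1|)%N) #|E_G adj p.1 p.2|.

(* Main.v *)
Require Import Defs.
From mathcomp Require Import all_boot all_order all_algebra.
From mathcomp Require Import classical_sets reals lra.
From Stdlib Require Classical_Prop.
Set Implicit Arguments. Unset Strict Implicit. Unset Printing Implicit Defensive.
Import Order.TTheory GRing.Theory Num.Theory.
Local Open Scope ring_scope.

Lemma key_real (R : realType) (T : finType) (k : nat) (g : T -> R) :
  #|[set w | g w < 0]| = k ->
  (forall th : R, 0 < th -> leq #|[set w | g w <= - th]| #|[set w | th <= g w]|) ->
  0 <= \sum_w g w.
Proof.
elim: k g => [|k IH] g Hk Hc.
  apply: sumr_ge0 => w _; rewrite leNgt; apply/negP => Hw.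
  by move/eqP: Hk; rewrite cards_eq0 => /eqP/setP/(_ w); rewrite !inE Hw.
have [v0 Hv0] : exists v0, v0 \in [set w | g w < 0].
  by apply/set0Pn; rewrite -card_gt0 Hk.
case: (@arg_minP _ R T v0 xpredT g) => // v _ Hv.
have vneg : g v < 0.
  by rewrite (le_lt_trans (Hv v0 _)) //; move: Hv0; rewrite inE.
set m := - g v.
have m0 : 0 < m by rewrite /m oppr_gt0.
have [u Hu] : exists u, u \in [set w | m <= g w].
  apply/set0Pn; rewrite -card_gt0; apply: leq_trans (Hc m m0).
  by rewrite card_gt0; apply/set0Pn; exists v; rewrite inE /m opprK.
rewrite inE in Hu.
have gu0 : 0 < g u by apply: lt_le_trans Hu.
have uv : u != v by apply/eqP => E; move: gu0; rewrite E ltNge (ltW vneg).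
pose g' w := if w == v then 0 else if w == u then g u - m else g w.
have g'v : g' v = 0 by rewrite /g' eqxx.
have g'u : g' u = g u - m by rewrite /g' (negbTE uv) eqxx.
have g'o : forall w, w != v -> w != u -> g' w = g w.
  by move=> w /negbTE H1 /negbTE H2; rewrite /g' H1 H2.
have Hsum : \sum_w g' w = \sum_w g w.
  rewrite (bigD1 v) //= (bigD1 u) //= [in RHS](bigD1 v) //= [in RHS](bigD1 u) //=.
  rewrite g'v g'u (eq_bigr g) ?addrA; last by move=> w /andP[? ?]; rewrite g'o.
  rewrite /m; congr (_ + _).
  by rewrite add0r opprK addrC.
rewrite -Hsum; apply: (IH g').
  have -> : [set w | g' w < 0] = [set w | g w < 0] :\ v.
    apply/setP => w; rewrite !inE.
    case: (eqVneq w v) => [->|wv]; first by rewrite g'v ltxx.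
    case: (eqVneq w u) => [->|wu]; last by rewrite g'o.
    by rewrite g'u subr_lt0 ltNge Hu ltNge (ltW gu0).
  by have := cardsD1 v [set w | g w < 0]; rewrite Hk inE vneg add1n => -[].
move=> th th0.
have HA : [set w | g' w <= - th] \subset [set w | g w <= - th] :\ v.
  apply/fintype.subsetP => w; rewrite !inE.
  case: (eqVneq w v) => [->|wv]; first by rewrite g'v oppr_ge0 leNgt th0.
  case: (eqVneq w u) => [->|wu]; last by rewrite g'o.
  rewrite g'u => H; have : 0 <= g u - m by rewrite subr_ge0.
  by move=> H2; move: (le_trans H2 H); rewrite oppr_ge0 leNgt th0.
have HB : [set w | th <= g w] :\ u \subset [set w | th <= g' w].
  apply/fintype.subsetP => w; rewrite !inE => /andP[wu H].
  case: (eqVneq w v) => [E|wv]; last by rewrite g'o.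
  by move: H; rewrite E => H; move: (le_lt_trans H vneg); rewrite ltNge (ltW th0).
apply: leq_trans (subset_leq_card HA) _; apply: leq_trans _ (subset_leq_card HB).
have := Hc th th0.
rewrite (cardsD1 v [set w | g w <= - th]) (cardsD1 u [set w | th <= g w]) !inE.
case: (leP th m) => Hth.
  by rewrite (le_trans Hth Hu) -lerNr -/m Hth add1n ltnS.
have -> : [set w | g w <= - th] :\ v = finset.set0.
  apply/setP => w; rewrite !inE; apply/negP => /andP[_ H].
  by move: (le_trans (Hv w isT) H); rewrite /m lerNr leNgt Hth.
by rewrite cards0.
Qed.

Lemma edge_adj (T : finType) (adj : rel T) (u v : T) :
  simple_graph adj -> [set u; v] \in edges adj -> adj u v.
Proof.
move=> [Hs Hi] /imset2P [a b _]; rewrite inE => Hab E.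
have ab : a != b by apply/eqP => E'; move: Hab; rewrite E' Hi.
have Hu : u \in [set a; b] by rewrite -E !inE eqxx.
have Hv : v \in [set a; b] by rewrite -E !inE eqxx orbT.
have Ha : a \in [set u; v] by rewrite E !inE eqxx.
have Hb : b \in [set u; v] by rewrite E !inE eqxx orbT.
move: Hu Hv Ha Hb; rewrite !inE.
case/orP=> /eqP -> ; case/orP=> /eqP ->; rewrite ?eqxx ?orbb //.
- by move=> _ /eqP E'; move: ab; rewrite E' eqxx.
- by rewrite Hs.
- by move=> /eqP E'; move: ab; rewrite E' eqxx.
Qed.

Lemma bigmin_ub (I : finType) (P : pred I) (F : I -> nat) idx i :
  P i -> (\big[minn/idx]_(j | P j) F j <= F i)%N.
Proof.
move=> Pi; have : i \in index_enum I by rewrite mem_index_enum.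
elim: (index_enum I) => // x r IH; rewrite inE big_cons.
case/orP => [/eqP <-|Hr]; first by rewrite Pi geq_minl.
by case: (P x); rewrite ?geq_min IH ?orbT.
Qed.

Lemma bigmin_idx (I : finType) (P : pred I) (F : I -> nat) idx :
  (\big[minn/idx]_(j | P j) F j <= idx)%N.
Proof. by elim/big_rec: _ => // i x _ Hx; rewrite geq_min Hx orbT. Qed.

Lemma bigmin_lb (I : finType) (P : pred I) (F : I -> nat) idx x :
  (x <= idx)%N -> (forall i, P i -> x <= F i)%N -> (x <= \big[minn/idx]_(j | P j) F j)%N.
Proof.
by move=> H1 H2; elim/big_rec: _ => // i y Pi Hy; rewrite leq_min H2.
Qed.

Lemma sum_ind (R : realType) (T : finType) (A : {set T}) :
  \sum_(v : T) ((v \in A)%:R : R) = #|A|%:R.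
Proof.
rewrite -sum1_card natr_sum [RHS]big_mkcond /=.
by apply: eq_bigr => v _; case: (v \in A).
Qed.

Lemma tau_lt (R : realType) (T : finType) (adj : rel T) (S U : {set T}) :
  simple_graph adj -> [disjoint S & U] -> (#|U| < #|S|)%N ->
  tau_star R (remove_edges adj (E_G adj S U)) < (#|T|%:R / 2%:R : R).
Proof.
move=> [Hs Hi] dSU ltUS.
pose f0 (v : T) : R := (1 - (v \in S)%:R + (v \in U)%:R) / 2.
have Hsum : \sum_v f0 v = (#|T|%:R - #|S|%:R + #|U|%:R) / 2.
  rewrite -mulr_suml big_split /= sumrB sum_ind sum_ind.
  by rewrite sumr_const -[1 *+ _]mulr_natl mulr1.
have key : forall a b, adj a b -> [set a; b] \notin E_G adj S U ->
    a \in S -> b \in U.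
  move=> a b Hab Hn aS; apply/negPn/negP => bU; move/negP: Hn; apply.
  rewrite inE; apply/andP; split.
    by apply/imset2P; exists a b; rewrite ?inE.
  apply/existsP; exists a; apply/existsP; exists b.
  by rewrite eqxx aS /= !inE (negbTE bU) orbF orbN.
have Hcov : frac_vertex_cover (remove_edges adj (E_G adj S U)) f0.
  split.
    by move=> v; rewrite /f0; case: (v \in S); case: (v \in U); rewrite /=; lra.
  move=> u v /andP[Huv HnE].
  case uS: (u \in S).
    have vU := key u v Huv HnE uS.
    rewrite /f0 uS vU (disjointFr dSU uS) (disjointFl dSU vU) /=; lra.
  case vS: (v \in S).
    have HnE' : [set v; u] \notin E_G adj S U by rewrite finset.setUC.
    have Hvu : adj v u by rewrite Hs.
    have uU := key v u Hvu HnE' vS.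
    rewrite /f0 uS vS (disjointFr dSU vS) uU /=; lra.
  rewrite /f0 uS vS; case: (u \in U); case: (v \in U); rewrite /=; lra.
have HL : has_lbound [set r : R | exists f : T -> R,
    frac_vertex_cover (remove_edges adj (E_G adj S U)) f /\ r = \sum_(v : T) f v].
  exists 0 => y [f [[Hf _] ->]]; exact: sumr_ge0.
apply: (le_lt_trans (ge_inf HL _)).
  by exists f0; split.
rewrite Hsum; have : (#|U|%:R < #|S|%:R :> R) by rewrite ltr_nat.
lra.
Qed.

Lemma tau_ge (R : realType) (T : finType) (adj : rel T) (E' : {set {set T}}) :
  simple_graph adj ->
  tau_star R (remove_edges adj E') < (#|T|%:R / 2%:R : R) ->
  exists S U : {set T}, [/\ [disjoint S & U], (#|U| < #|S|)%N & E_G adj S U \subset E'].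
Proof.
move=> Hsg Htau.
have Hne : ([set r : R | exists f : T -> R,
    frac_vertex_cover (remove_edges adj E') f /\ r = \sum_(v : T) f v] !=set0)%classic.
  exists (\sum_(v : T) (1 : R)); exists (fun _ => 1); split => //.
  by split => *; lra.
have [y [f [[Hf0 Hf1] ->]] Hlt] := inf_lt Hne Htau.
pose g v := f v - 2^-1.
have Hg : \sum_v g v < 0.
  rewrite sumrB sumr_const -[2^-1 *+ _]mulr_natl; move: Hlt; lra.
have [th [th0 Hth]] : exists th : R, 0 < th /\
    ltn #|[set w | th <= g w]| #|[set w | g w <= - th]|.
  apply: Classical_Prop.NNPP => Hn.
  have := @key_real R T _ g (erefl _).
  move=> H; move: Hg; rewrite ltNge H // => th th0; rewrite leqNgt.
  by apply/negP => Hc; apply: Hn; exists th; split.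
exists [set w | g w <= - th], [set w | th <= g w]; split => //.
  rewrite -setI_eq0; apply/eqP/setP => w; rewrite !inE; apply/negP => /andP[H1 H2].
  by have := le_trans H2 H1; lra.
apply/fintype.subsetP => e; rewrite inE => /andP[He].
case/existsP => u /existsP [v /andP[/andP[/eqP Ee uS] H]].
apply: contraT => HeE'.
have Huv : adj u v by apply: edge_adj Hsg _; rewrite -Ee.
have := Hf1 u v; rewrite /remove_edges Huv -Ee HeE' => /(_ isT).
move: uS H; rewrite /g !inE negb_or -!ltNge.
move=> H0; case/orP => [H|/andP[H1 H2]] H3; lra.
Qed.

Theorem corollary6 (R : realType) (T : finType) (adj : rel T) :
  simple_graph adj -> mu R adj = mu_rhs adj.
Proof.
move=> Hsg; apply/eqP; rewrite eqn_leq; apply/andP; split.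
  apply: bigmin_lb; first exact: bigmin_idx.
  move=> [S U] /andP[/= dSU ltUS].
  apply: bigmin_ub; apply/andP; split; last exact: tau_lt.
  by rewrite powersetE; apply/fintype.subsetP => e; rewrite inE => /andP[].
apply: bigmin_lb; first exact: bigmin_idx.
move=> E' /andP[_ Ht].
have [S [U [dSU ltUS sub]]] := tau_ge Hsg Ht.
apply: leq_trans (subset_leq_card sub).
by apply: (@bigmin_ub _ _ (fun p : {set T} * {set T} => #|E_G adj p.1 p.2|) _ (S, U)) => /=; rewrite dSU.
Qed.
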